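(* Let $G$ be a finite, simple, connected graph with $m$ edges and let $k \geq 2$ be an integer. Then $$\chi_{dd}(P_{k+1}) \leq \chi_{dd}(S_k(G)) \leq (m-1)\chi_{dd}(P_k) + \chi_{dd}(P_{k+1}),$$ where $S_k(G)$ is the $k$-subdivision of $G$, i.e. the graph obtained from $G$ by replacing each edge $uv$ with a path of length $k$ (with $k-1$ new internal vertices) joining $u$ and $v$, and $P_n$ denotes the path on $n$ vertices.
   Context: All graphs are finite, undirected and simple. For a vertex $w$, $N(w)$ is its open neighborhood and $N[w]=N(w)\cup\{w\}$ its closed neighborhood. A vertex $w$ dominates a set $S$ of vertices if $S \subseteq N[w]$. A domination coloring of a graph $H$ is a proper vertex coloring of $H$ (adjacent vertices receive different colors; a color class is the set of all vertices receiving a given color) such that every vertex of $H$ dominates at least one color class (possibly its own class), and every color class is dominated by at least one vertex of $H$. The domination chromatic number $\chi_{dd}(H)$ is the minimum number of color classes in a domination coloring of $H$. *)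

(* Defs.v *)
From mathcomp Require Import all_boot.
Set Implicit Arguments. Unset Strict Implicit. Unset Printing Implicit Defensive.

(* A finite simple graph is a symmetric irreflexive relation e on a finType T. *)

Section DomColoring.
Variables (T : finType) (e : rel T).

Definition dominates_class n (c : {ffun T -> 'I_n}) (w : T) (i : 'I_n) : bool :=
  [forall x, (c x == i) ==> ((x == w) || e w x)].

(* properness is required for adjacent distinct vertices; for the simple
   (irreflexive) graphs considered this is the usual condition. *)
(* c is a domination coloring whose n colors are all used
   (so that its number of color classes is exactly n). *)
Definition dom_coloring n (c : {ffun T -> 'I_n}) : bool :=
  [&& [forall x, forall y, (x != y) && e x y ==> (c x != c y)],
      [forall i, exists x, c x == i],
      [forall v, exists i, dominates_class c v i] &
      [forall i, exists v, dominates_class c v i]].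

Definition has_dom_coloring n : bool := [exists c : {ffun T -> 'I_n}, dom_coloring c].

Lemma has_dom_coloring_card : has_dom_coloring #|T|.
Proof.
apply/existsP; exists [ffun x => enum_rank x].
have Hd : forall v, dominates_class [ffun x => enum_rank x] v (enum_rank v).
  move=> v; apply/forallP => x; rewrite !ffunE; apply/implyP => /eqP H.
  by rewrite (enum_rank_inj H) eqxx.
apply/and4P; split.
- apply/forallP => x; apply/forallP => y; apply/implyP; rewrite !ffunE.
  case/andP=> /negP Hxy _; apply/negP => /eqP H; apply: Hxy; apply/eqP.
  exact: enum_rank_inj H.
- apply/forallP => i; apply/existsP; exists (enum_val i); by rewrite ffunE enum_valK.
- apply/forallP => v; apply/existsP; exists (enum_rank v); exact: Hd.
- apply/forallP => i; apply/existsP; exists (enum_val i).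
  have := Hd (enum_val i); by rewrite enum_valK.
Qed.

Lemma ex_has_dom_coloring : exists n, has_dom_coloring n.
Proof. by exists #|T|; exact: has_dom_coloring_card. Qed.

Definition chi_dd : nat := ex_minn ex_has_dom_coloring.

End DomColoring.

Definition path_rel (n : nat) : rel 'I_n := fun i j => (i.+1 == j) || (j.+1 == i).

Section Subdivision.
Variables (T : finType) (e : rel T) (k : nat).

(* Each (unordered) edge is represented once, oriented by enum_rank. *)
Definition oedge (x y : T) : bool := e x y && (enum_rank x < enum_rank y).

Definition num_edges : nat := #|[set p : T * T | oedge p.1 p.2]|.

(* vertices of S_k(G): original vertices, plus internal vertices (x, y, j),
   j < k-1, on the oriented edge (x,y) *)
Definition svert := (T + {p : (T * T) * 'I_k.-1 | oedge p.1.1 p.1.2})%type.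

(* position of a vertex along the path replacing the edge (x,y):
   x at 0, internal vertex j at j+1, y at k *)
Definition spos (x y : T) (a : svert) : option nat :=
  match a with
  | inl z => if z == x then Some 0 else if z == y then Some k else None
  | inr p => if (val p).1 == (x, y) then Some (nat_of_ord (val p).2).+1 else None
  end.

Definition subdiv_rel : rel svert := fun a b =>
  [exists x, exists y, oedge x y &&
     match spos x y a, spos x y b with
     | Some i, Some j => (i.+1 == j) || (j.+1 == i)
     | _, _ => false
     end].

End Subdivision.

Arguments subdiv_rel {T} e k.
Arguments spos {T e k} x y a.

(* Main.v *)
Require Import Defs.
From mathcomp Require Import all_boot zify.
From Stdlib Require Import Lia.
Set Implicit Arguments. Unset Strict Implicit. Unset Printing Implicit Defensive.

Definition weakdd (V : finType) (e : rel V) (K : eqType) (c : V -> K) : Prop :=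
  [/\ forall x y, x != y -> e x y -> c x != c y,
      forall v, exists u, forall x, c x = c u -> (x == v) || e v x &
      forall u, exists v, forall x, c x = c u -> (x == v) || e v x].

Lemma chi_dd_le (V : finType) (e : rel V) n : has_dom_coloring e n -> chi_dd e <= n.
Proof. by move=> H; rewrite /chi_dd; case: ex_minnP => m _; apply. Qed.

Lemma chi_dd_has (V : finType) (e : rel V) : has_dom_coloring e (chi_dd e).
Proof. by rewrite /chi_dd; case: ex_minnP. Qed.

Lemma weak_chi (V : finType) (e : rel V) (K : eqType) (c : V -> K) :
  weakdd e c -> chi_dd e <= size (undup [seq c x | x <- enum V]).
Proof.
case=> Hp Hv Hu.
set s := undup _.
have ins : forall x, c x \in s by move=> x; rewrite mem_undup map_f // mem_enum.
have lt : forall x, index (c x) s < size s by move=> x; rewrite index_mem.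
have us : uniq s by exact: undup_uniq.
pose c' := [ffun x => Ordinal (lt x)].
have Ec : forall x y, (c' x == c' y) = (c x == c y).
  move=> x y; rewrite !ffunE; apply/eqP/eqP => [/(congr1 val)/= H|H]; last by apply: val_inj => /=; rewrite H.
  by move: (congr1 (nth (c x) s) H); rewrite !nth_index.
have Hsurj : forall i : 'I_(size s), exists x, c' x = i.
  move=> i; case E: (enum V) => [|x0 r].
    have : 0 < size s by apply: leq_ltn_trans (ltn_ord i).
    by move=> H; exfalso; move: H; rewrite /s E.
  have : nth (c x0) s i \in s by apply: mem_nth.
  rewrite {2}/s mem_undup => /mapP [x _ Hx]; exists x.
  by apply: val_inj; rewrite /= ffunE /= -Hx index_uniq.
apply: chi_dd_le; apply/existsP; exists c'; apply/and4P; split.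
- apply/forallP=> x; apply/forallP=> y; apply/implyP=> /andP[nxy exy].
  by rewrite Ec; exact: Hp.
- by apply/forallP=> i; apply/existsP; case: (Hsurj i) => x <-; exists x.
- apply/forallP=> v; apply/existsP; case: (Hv v) => u Hu'; exists (c' u).
  by apply/forallP=> x; apply/implyP; rewrite Ec => /eqP; apply: Hu'.
- apply/forallP=> i; apply/existsP; case: (Hsurj i) => u <-.
  case: (Hu u) => v Hv'; exists v.
  by apply/forallP=> x; apply/implyP; rewrite Ec => /eqP; apply: Hv'.
Qed.

Lemma domP (V : finType) (e : rel V) n (c : {ffun V -> 'I_n}) v i :
  reflect (forall x, c x = i -> (x == v) || e v x) (dominates_class e c v i).
Proof.
apply: (iffP forallP) => H x.
  by move=> Hx; move: (H x); rewrite Hx eqxx.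
by apply/implyP => /eqP; apply: H.
Qed.

Lemma dd_weak (V : finType) (e : rel V) n (c : {ffun V -> 'I_n}) :
  dom_coloring e c -> weakdd e c.
Proof.
case/and4P=> /forallP Hp /forallP Hs /forallP Hv /forallP Hd; split.
- move=> x y nxy exy; move/forallP: (Hp x) => /(_ y); rewrite nxy exy; exact.
- move=> v; case/existsP: (Hv v) => i /domP Hi.
  case/existsP: (Hs i) => u /eqP Hu; exists u => x; rewrite Hu; exact: Hi.
- move=> u; case/existsP: (Hd (c u)) => v /domP Hi; exists v; exact: Hi.
Qed.

Lemma restrict (V W : finType) (eV : rel V) (eW : rel W) (f : W -> V) n
   (c : {ffun V -> 'I_n}) :
  symmetric eV -> injective f -> (forall a b, eW a b = eV (f a) (f b)) ->
  (forall w, w \notin codom f -> forall a b,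
      (f a == w) || eV w (f a) -> (f b == w) || eV w (f b) -> a = b) ->
  dom_coloring eV c -> exists c' : W -> 'I_n, weakdd eW c'.
Proof.
move=> sym inj Ee Hout dd.
have [Hp Hv Hd] := dd_weak dd.
case/and4P: dd => _ /forallP Hs /forallP Hv' _.
pose good a := [exists i, dominates_class eV c (f a) i && [exists b, c (f b) == i]].
pose gam a := odflt (c (f a)) [pick i | dominates_class eV c (f a) i].
pose c' a := if good a then c (f a) else gam a.
have NN : forall x v, (f x == f v) || eV (f v) (f x) -> (x == v) || eW v x.
  by move=> x v; rewrite (inj_eq inj) Ee.
have F1 : forall a, ~~ good a ->
    dominates_class eV c (f a) (gam a) /\ forall b, c (f b) != gam a.
  move=> a ng; rewrite /gam; case: pickP => [i Hi|H0] /=; last first.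
    by case/existsP: (Hv' (f a)) => i; rewrite H0.
  split=> // b; apply/eqP => Eb; move/negP: ng; apply.
  by apply/existsP; exists i; rewrite Hi; apply/existsP; exists b; rewrite Eb.
have F2 : forall a b, ~~ good a -> ~~ good b -> gam a = gam b -> a = b.
  move=> a b na nb E.
  case/existsP: (Hs (gam a)) => w /eqP Hw.
  have wn : w \notin codom f.
    apply/negP => /codomP [b' Eb']; have [_ H] := F1 a na.
    by move: (H b'); rewrite -Eb' Hw eqxx.
  apply: (Hout w wn).
    have [/domP H _] := F1 a na; move: (H w Hw).
    by rewrite eq_sym sym.
  have [/domP H _] := F1 b nb; move: (H w); rewrite Hw E => /(_ erefl).
  by rewrite eq_sym sym.
have F3 : forall x y, good x -> ~~ good y -> c' x != c' y.
  move=> x y gx ny; rewrite /c' gx (negbTE ny).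
  by have [_ H] := F1 y ny; apply: H.
have Fself : forall a, ~~ good a -> forall x, c' x = c' a -> x = a.
  move=> a na x; case gx: (good x).
    by move=> E; move: (F3 x a gx na); rewrite E eqxx.
  by rewrite /c' gx (negbTE na); apply: F2; rewrite ?gx.
exists c'; split.
- move=> x y nxy exy.
  case gx: (good x); case gy: (good y).
  + rewrite /c' gx gy; apply: Hp; first by rewrite (inj_eq inj).
    by rewrite -Ee.
  + by apply: F3; rewrite ?gx ?gy.
  + by rewrite eq_sym; apply: F3; rewrite ?gx ?gy.
  + apply/eqP => E; move: nxy; rewrite (Fself y _ x E) ?eqxx //.
    by rewrite gy.
- move=> v; case gv: (good v); last first.
    by exists v => x /(Fself v); rewrite gv => /(_ erefl) ->; rewrite eqxx.
  case/existsP: gv => i /andP [/domP Hi /existsP [b /eqP Hb]].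
  exists b => x.
  case gb: (good b).
    case gx: (good x); last first.
      by move=> E; move: (F3 b x gb); rewrite gx E eqxx => /(_ erefl).
    by rewrite /c' gx gb Hb => E; apply: NN; apply: Hi.
  move/(Fself b); rewrite gb => /(_ erefl) ->.
  by apply: NN; apply: Hi.
- move=> u; case gu: (good u); last first.
    by exists u => x /(Fself u); rewrite gu => /(_ erefl) ->; rewrite eqxx.
  have Hx : forall x, c' x = c' u -> c (f x) = c (f u).
    move=> x; case gx: (good x); first by rewrite /c' gx gu.
    by move=> E; move: (F3 u x gu); rewrite gx E eqxx => /(_ erefl).
  case: (Hd (f u)) => w Hw.
  case: (boolP (w \in codom f)) => [/codomP [b Eb] | wn].
    by exists b => x /Hx E; apply: NN; rewrite -Eb; apply: Hw.
  exists u => x /Hx E.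
  by rewrite (Hout w wn x u (Hw _ E) (Hw _ erefl)) eqxx.
Qed.

Definition nadj (p q : nat) := (p.+1 == q) || (q.+1 == p).
Definition nN (v x : nat) := (x == v) || nadj v x.

Definition natpw (L B : nat) (g : nat -> nat) : Prop :=
 [/\ forall i, i < L -> g i < B,
     forall i j, i < L -> j < L -> i.+1 = j -> g i != g j,
     forall v, v < L -> exists2 u, u < L &
        forall x, x < L -> g x = g u -> nN v x &
     forall u, u < L -> exists2 v, v < L &
        forall x, x < L -> g x = g u -> nN v x].

Definition gnat L B (c : 'I_L -> 'I_B) (i : nat) : nat :=
  if insub i is Some o then nat_of_ord (c o) else 0.

Lemma gnatE L B (c : 'I_L -> 'I_B) (i : 'I_L) : gnat c i = c i.
Proof. by rewrite /gnat valK. Qed.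

Lemma natpw_of_weak L B (c : 'I_L -> 'I_B) :
  weakdd (@path_rel L) c -> natpw L B (gnat c).
Proof.
case=> Hp Hv Hu; split.
- by move=> i iL; rewrite (gnatE c (Ordinal iL)).
- move=> i j iL jL Eij; rewrite (gnatE c (Ordinal iL)) (gnatE c (Ordinal jL)).
  apply: Hp; first by apply/eqP => /(congr1 val) /= E; lia.
  by rewrite /path_rel /= Eij eqxx.
- move=> v vL; case: (Hv (Ordinal vL)) => u Hu'; exists (val u); first exact: ltn_ord.
  move=> x xL; rewrite (gnatE c (Ordinal xL)) (gnatE c u) => /val_inj /Hu'.
  by rewrite /nN /nadj /path_rel.
- move=> u uL; case: (Hu (Ordinal uL)) => v Hv'; exists (val v); first exact: ltn_ord.
  move=> x xL; rewrite (gnatE c (Ordinal xL)) (gnatE c (Ordinal uL)) => /val_inj /Hv'.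
  by rewrite /nN /nadj /path_rel.
Qed.

Lemma natpw_dd n : exists g, natpw n (chi_dd (@path_rel n)) g.
Proof.
case/existsP: (chi_dd_has (@path_rel n)) => c /dd_weak H.
by exists (gnat c); apply: natpw_of_weak.
Qed.

Lemma path_rel_sym n : symmetric (@path_rel n).
Proof. by move=> i j; rewrite /path_rel orbC. Qed.

Lemma natpw_pred n : exists g, natpw n (chi_dd (@path_rel n.+1)) g.
Proof.
case/existsP: (chi_dd_has (@path_rel n.+1)) => c dd.
have [c' Hc'] : exists c' : 'I_n -> 'I_(chi_dd (@path_rel n.+1)), weakdd (@path_rel n) c'.
  apply: (@restrict _ _ (@path_rel n.+1) (@path_rel n) (widen_ord (leqnSn n)) _ c) => //.
  - exact: path_rel_sym.
  - by move=> a b /(congr1 val) /= /val_inj.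
  - move=> w wn a b.
    have wv : val w = n.
      apply/eqP; rewrite eqn_leq -ltnS ltn_ord /=; rewrite leqNgt; apply/negP => wlt.
      move/negP: wn; apply; apply/codomP; exists (Ordinal wlt); exact: val_inj.
    rewrite /path_rel -!(inj_eq val_inj) /= wv.
    have := ltn_ord a; have := ltn_ord b.
    case: a b => [a Ha] [b Hb] /=.
    move=> _ _ /orP [/eqP|/orP [/eqP|/eqP]] Ea /orP [/eqP|/orP [/eqP|/eqP]] Eb;
      apply: val_inj => /=; lia.
by exists (gnat c'); apply: natpw_of_weak.
Qed.

Definition Fv (T : finType) (e : rel T) (k : nat) (x y : T) (p : nat) : svert e k :=
  if p == 0 then inl x else if p == k then inl y else
  match (insub p.-1 : option 'I_k.-1) with
  | Some j =>
    match (insub ((x, y), j)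
       : option {q : (T * T) * 'I_k.-1 | oedge e q.1.1 q.1.2}) with
    | Some s => inr s | None => inl x end
  | None => inl x end.

Lemma oedge_neq (T : finType) (e : rel T) x y : irreflexive e -> oedge e x y -> x != y.
Proof. by move=> irr /andP [exy _]; apply/eqP => E; move: exy; rewrite E irr. Qed.

Lemma oedge_asym (T : finType) (e : rel T) x y : oedge e x y -> ~~ oedge e y x.
Proof. by case/andP=> _ H; apply/negP => /andP [_ H']; move: (ltn_trans H H'); rewrite ltnn. Qed.

Lemma oedge_or (T : finType) (e : rel T) x y : symmetric e -> irreflexive e ->
  e x y -> oedge e x y || oedge e y x.
Proof.
move=> sym irr exy; rewrite /oedge exy sym exy /=.
have : enum_rank x != enum_rank y.
  by apply/eqP => /enum_rank_inj E; move: exy; rewrite E irr.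
by rewrite neq_ltn.
Qed.

Lemma Fv0 (T : finType) (e : rel T) k x y : Fv e k x y 0 = inl x.
Proof. by []. Qed.

Lemma Fvk (T : finType) (e : rel T) k x y : 0 < k -> Fv e k x y k = inl y.
Proof. by move=> k0; rewrite /Fv eqxx; have -> : (k == 0) = false by lia. Qed.

Lemma Fv_int (T : finType) (e : rel T) k x y p : oedge e x y -> 0 < p < k ->
  exists s, Fv e k x y p = inr s /\ (val s).1 = (x, y) /\ val (val s).2 = p.-1.
Proof.
move=> H /andP [p0 pk]; rewrite /Fv.
have -> : (p == 0) = false by lia.
have -> : (p == k) = false by lia.
have pk' : p.-1 < k.-1 by lia.
by rewrite insubT insubT /=; eexists; split.
Qed.

Lemma spos_Fv (T : finType) (e : rel T) k x y p : irreflexive e -> 0 < k ->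
  oedge e x y -> p <= k -> spos x y (Fv e k x y p) = Some p.
Proof.
move=> irr k0 H pk.
case: (posnP p) => [->|p0]; first by rewrite Fv0 /= eqxx.
case: (ltngtP p k) => [plt|kp|->]; last first.
- by rewrite Fvk //= eq_sym (negbTE (oedge_neq irr H)) eqxx.
- by lia.
have [s [-> [E1 E2]]] := Fv_int (k:=k) H (introT andP (conj p0 plt)).
by rewrite /= E1 eqxx E2 prednK.
Qed.

Lemma spos_inv (T : finType) (e : rel T) k x y p (a : svert e k) :
  irreflexive e -> 0 < k -> oedge e x y ->
  spos x y a = Some p -> p <= k /\ a = Fv e k x y p.
Proof.
move=> irr k0 H; case: a => [z|s] /=.
  case: eqP => [-> [<-]|_]; first by rewrite Fv0.
  by case: eqP => [-> [<-]|//]; rewrite Fvk.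
case: eqP => // E1 [<-].
have lt : nat_of_ord (sval s).2 < k - 1 by rewrite subn1; exact: ltn_ord.
have Hp : 0 < (nat_of_ord (sval s).2).+1 < k by apply/andP; split => //; lia.
have [s' [-> [E1' E2']]] := Fv_int (k:=k) H Hp.
split; first by lia.
have -> : s = s'; last by [].
move: E1 E1' E2'; clear lt Hp; case: s => [[[a b] j] Hs]; case: s' => [[[a' b'] j'] Hs'] /=.
move=> E1 E1' E; apply: val_inj => /=; rewrite E1 E1'; congr pair.
by apply: val_inj; rewrite /= E.
Qed.

Lemma subdivP (T : finType) (e : rel T) k (a b : svert e k) :
  irreflexive e -> 0 < k ->
  subdiv_rel e k a b <-> exists x y p q, [/\ oedge e x y, (p <= k) && (q <= k),
      a = Fv e k x y p, b = Fv e k x y q & nadj p q].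
Proof.
move=> irr k0; split.
  case/existsP=> x /existsP [y /andP [H]].
  case Ea: (spos x y a) => [p|//]; case Eb: (spos x y b) => [q|//] Hpq.
  have [pk ->] := spos_inv irr k0 H Ea; have [qk ->] := spos_inv irr k0 H Eb.
  by exists x, y, p, q; rewrite pk qk.
case=> x [y [p [q [H /andP [pk qk] -> -> Hpq]]]].
apply/existsP; exists x; apply/existsP; exists y; rewrite H /=.
by rewrite !spos_Fv.
Qed.

Lemma Fv_inl (T : finType) (e : rel T) k x y p z : 0 < k -> oedge e x y -> p <= k ->
  Fv e k x y p = inl z -> (p = 0 /\ z = x) \/ (p = k /\ z = y).
Proof.
move=> k0 H pk.
case: (posnP p) => [->|p0]; first by rewrite Fv0 => [[]]; left.
case: (ltngtP p k) => [plt|kp|->]; last 2 first.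
- by lia.
- by rewrite Fvk // => [[]]; right.
have [s [-> _]] := Fv_int (k:=k) H (introT andP (conj p0 plt)); done.
Qed.

Lemma Fv_eq_int (T : finType) (e : rel T) k x y x' y' p q :
  0 < k -> oedge e x y -> oedge e x' y' -> 0 < p < k -> q <= k ->
  Fv e k x y p = Fv e k x' y' q -> [/\ x = x', y = y' & p = q].
Proof.
move=> k0 H H' Hp qk.
have [s [-> [E1 E2]]] := Fv_int (k:=k) H Hp.
case: (posnP q) => [->|q0]; first by rewrite Fv0.
case: (ltngtP q k) => [qlt|kq|->]; last 2 first.
- by lia.
- by rewrite Fvk.
have [s' [-> [E1' E2']]] := Fv_int (k:=k) H' (introT andP (conj q0 qlt)).
case=> Es; move: E1 E2; rewrite Es E1' E2' => [[-> ->]] Epq; split => //.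
by lia.
Qed.

Lemma Fv_inj1 (T : finType) (e : rel T) k x y p q : irreflexive e ->
  0 < k -> oedge e x y -> p <= k -> q <= k ->
  Fv e k x y p = Fv e k x y q -> p = q.
Proof.
move=> irr k0 H pk qk E.
case: (boolP (0 < p < k)) => Hp; first by case: (Fv_eq_int k0 H H Hp qk E).
case: (boolP (0 < q < k)) => Hq; first by case: (Fv_eq_int k0 H H Hq pk (esym E)).
have nxy := oedge_neq irr H.
have Ep : p = 0 \/ p = k by lia.
have Eq : q = 0 \/ q = k by lia.
case: Ep Eq E => -> [] -> //; rewrite Fv0 Fvk // => [[]] E;
  by move: nxy; rewrite E eqxx.
Qed.

Lemma Fv_adj (T : finType) (e : rel T) k x y p q : irreflexive e ->
  1 < k -> oedge e x y -> p <= k -> q <= k ->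
  subdiv_rel e k (Fv e k x y p) (Fv e k x y q) = nadj p q.
Proof.
move=> irr k1 H pk qk.
have k0 : 0 < k by lia.
apply/idP/idP => [|Hpq]; last first.
  by apply/(subdivP _ _ irr k0); exists x, y, p, q; rewrite pk qk.
case/(subdivP _ _ irr k0) => x' [y' [p' [q' [H' /andP [pk' qk'] Ep Eq Hpq]]]].
case: (boolP (0 < p < k)) => Hp.
  have [ex ey epp] := Fv_eq_int k0 H H' Hp pk' Ep; subst x' y' p'.
  by rewrite (Fv_inj1 irr k0 H qk qk' Eq).
case: (boolP (0 < q < k)) => Hq.
  have [ex ey eqq] := Fv_eq_int k0 H H' Hq qk' Eq; subst x' y' q'.
  by rewrite (Fv_inj1 irr k0 H pk pk' Ep).
have [Hp'|Hq'] : 0 < p' < k \/ 0 < q' < k by move: Hpq; rewrite /nadj; lia.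
  have [ex ey epp] := Fv_eq_int k0 H' H Hp' pk (esym Ep); subst; by rewrite Hp' in Hp.
have [ex ey epp] := Fv_eq_int k0 H' H Hq' qk (esym Eq); subst; by rewrite Hq' in Hq.
Qed.

Lemma subdiv_sym (T : finType) (e : rel T) k : irreflexive e -> 0 < k ->
  symmetric (subdiv_rel e k).
Proof.
move=> irr k0 a b; apply/idP/idP => /(subdivP _ _ irr k0) [x [y [p [q [H pq Ea Eb Hpq]]]]];
  apply/(subdivP _ _ irr k0); exists x, y, q, p; rewrite andbC pq;
  by split => //; move: Hpq; rewrite /nadj orbC.
Qed.

Lemma nb_end (T : finType) (e : rel T) k x y a (w : svert e k) :
  irreflexive e -> 1 < k -> oedge e x y -> a <= k ->
  (forall p, p <= k -> w != Fv e k x y p) ->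
  subdiv_rel e k w (Fv e k x y a) ->
  exists x' y' p', [/\ oedge e x' y', 0 < p' < k, w = Fv e k x' y' p' &
     (a = 0 /\ ((x == x') || (x == y'))) \/ (a = k /\ ((y == x') || (y == y')))].
Proof.
move=> irr k1 H ak Hw.
have k0 : 0 < k by lia.
case/(subdivP _ _ irr k0) => x' [y' [p' [q' [H' /andP [pk' qk'] Ew Ea Hpq]]]].
case: (boolP (0 < a < k)) => Ha.
  have [ex ey eaq] := Fv_eq_int k0 H H' Ha qk' Ea; subst x' y'.
  by move: (Hw p' pk'); rewrite Ew eqxx.
case: (boolP (0 < q' < k)) => Hq.
  have [ex ey eaq] := Fv_eq_int k0 H' H Hq ak (esym Ea); subst.
  by rewrite Hq in Ha.
have Hp' : 0 < p' < k by move: Hpq; rewrite /nadj; lia.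
exists x', y', p'; split => //.
have Ea' : a = 0 \/ a = k by lia.
have Eq' : q' = 0 \/ q' = k by lia.
case: Ea' Eq' Ea => -> [] ->; rewrite ?Fv0 ?Fvk // => [[->]].
- by left; rewrite eqxx.
- by left; rewrite eqxx orbT.
- by right; rewrite eqxx.
- by right; rewrite eqxx orbT.
Qed.

Lemma undup_ord n (s : seq 'I_n) : size (undup s) <= n.
Proof.
apply: (@leq_trans (size (enum 'I_n))); last by rewrite size_enum_ord.
apply: uniq_leq_size; first exact: undup_uniq.
by move=> i _; rewrite mem_enum.
Qed.

Lemma lower_bound (T : finType) (e : rel T) k : symmetric e -> irreflexive e ->
  1 < k -> (exists x y, e x y) ->
  chi_dd (@path_rel k.+1) <= chi_dd (subdiv_rel e k).
Proof.
move=> sym irr k1 [x0 [y0 e0]].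
have k0 : 0 < k by lia.
have [x [y H]] : exists x y, oedge e x y.
  by case/orP: (oedge_or sym irr e0) => H; [exists x0, y0| exists y0, x0].
case/existsP: (chi_dd_has (subdiv_rel e k)) => c dd.
pose f (i : 'I_k.+1) := Fv e k x y i.
have [c' Hc'] : exists c' : 'I_k.+1 -> 'I_(chi_dd (subdiv_rel e k)), weakdd (@path_rel k.+1) c'.
  apply: (@restrict _ _ (subdiv_rel e k) (@path_rel k.+1) f _ c) => //.
  - exact: subdiv_sym.
  - move=> i j /Fv_inj1 E; apply: val_inj; apply: E => //; by rewrite -ltnS.
  - by move=> i j; rewrite /f Fv_adj // -ltnS.
  - move=> w wn a b.
    have Hw : forall p, p <= k -> w != Fv e k x y p.
      move=> p pk; apply/eqP => E; move/negP: wn; apply; apply/codomP.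
      by exists (Ordinal (pk : p < k.+1)).
    have ak : a <= k by rewrite -ltnS.
    have bk : b <= k by rewrite -ltnS.
    rewrite /f !(eq_sym _ w) (negbTE (Hw _ ak)) (negbTE (Hw _ bk)) /=.
    move=> /(nb_end irr k1 H ak Hw) [x1 [y1 [p1 [H1 Hp1 Ew1 C1]]]].
    move=> /(nb_end irr k1 H bk Hw) [x2 [y2 [p2 [H2 Hp2 Ew2 C2]]]].
    have [ex ey _] := Fv_eq_int k0 H1 H2 Hp1 (ltnW (proj2 (andP Hp2))) (etrans (esym Ew1) Ew2).
    subst x2 y2.
    apply: val_inj => /=.
    have nxy := oedge_neq irr H.
    have na := oedge_asym H.
    have Hp1k : p1 <= k by lia.
    case: C1 => [[Ea X1]|[Ea X1]]; case: C2 => [[Eb X2]|[Eb X2]]; rewrite ?Ea ?Eb //;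
      exfalso; case/orP: X1 => /eqP E1; case/orP: X2 => /eqP E2; subst;
      try (by move: nxy; rewrite eqxx);
      try (by move: (Hw p1 Hp1k); rewrite eqxx);
      by move: na; rewrite H1.
have := weak_chi Hc'.
move=> Hle; apply: (leq_trans Hle); exact: undup_ord.
Qed.

Lemma tree (T : finType) (e : rel T) x0 : symmetric e ->
  (forall x y, connect e x y) ->
  exists (r : T -> nat) (par : T -> T),
    forall z, z != x0 -> e z (par z) /\ r (par z) < r z.
Proof.
move=> sym conn.
pose P z n := [exists p : n.-tuple T, path e x0 p && (last x0 p == z)].
have exP : forall z, exists n, P z n.
  move=> z; case/connectP: (conn x0 z) => p pth Ez.
  exists (size p); apply/existsP; exists (in_tuple p); rewrite pth /=.
  by rewrite -Ez.
pose r z := ex_minn (exP z).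
have key : forall z, z != x0 -> exists y, e z y && (r y < r z).
  move=> z nz; rewrite /r; case: ex_minnP => n /existsP [p /andP [pth /eqP Ez]] Hmin.
  case: p pth Ez => s /= /eqP sz.
  case/lastP: s sz => [|s' z'] sz; first by move=> _ /= E; move: nz; rewrite E eqxx.
  rewrite rcons_path last_rcons => /andP [pth' ez'] Ez'; subst z'.
  exists (last x0 s'); rewrite sym ez' /=.
  case: ex_minnP => m _ Hm.
  have : P (last x0 s') (size s').
    by apply/existsP; exists (in_tuple s'); rewrite pth' eqxx.
  move/Hm; rewrite -sz size_rcons; lia.
exists r, (fun z => odflt z [pick y | e z y && (r y < r z)]) => z nz.
case: pickP => [y /andP [H1 H2]|H0] //=.
by case: (key z nz) => y; rewrite H0.
Qed.

Definition pe (T : finType) (e : rel T) (x0 y0 : T) (par : T -> T) (z : T) : T * T :=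
  if (z == x0) || (z == y0) then (x0, y0)
  else if oedge e z (par z) then (z, par z) else (par z, z).

Definition piE (T : finType) (e : rel T) k x0 y0 par (v : svert e k) : T * T :=
  match v with inl z => pe e x0 y0 par z | inr s => (val s).1 end.

Definition posE (T : finType) (e : rel T) k x0 y0 par (v : svert e k) : nat :=
  match v with
  | inl z => if z == (pe e x0 y0 par z).1 then 0 else k
  | inr s => (nat_of_ord (val s).2).+1 end.

Definition loE (T : finType) (x0 y0 : T) (par : T -> T) (E : T * T) : nat :=
  if E == (x0, y0) then 0
  else if [&& E.1 != x0, E.1 != y0 & par E.1 == E.2] then 0 else 1.

Definition hiE (T : finType) k (x0 y0 : T) (par : T -> T) (E : T * T) : nat :=
  if E == (x0, y0) then k
  else if [&& E.2 != x0, E.2 != y0 & par E.2 == E.1] then k else k.-1.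

Lemma piece_a (T : finType) (e : rel T) k x0 y0 par (v : svert e k) :
  symmetric e -> irreflexive e -> 1 < k -> oedge e x0 y0 ->
  (forall z, z != x0 -> e z (par z)) ->
  let E := piE x0 y0 par v in let p := posE x0 y0 par v in
  [/\ oedge e E.1 E.2, loE x0 y0 par E <= p, p <= hiE k x0 y0 par E
    & v = Fv e k E.1 E.2 p].
Proof.
move=> sym irr k1 H0 Hpar /=.
have k0 : 0 < k by lia.
have nxy0 := oedge_neq irr H0.
case: v => [z|s] /=.
  rewrite /pe; case: ifP => [/orP [/eqP ->|/eqP ->]|].
  - by rewrite /loE /hiE eqxx /= eqxx Fv0; split => //; lia.
  - rewrite /= eq_sym (negbTE nxy0) /loE /hiE eqxx /= Fvk //; split => //; lia.
  move/negbT; rewrite negb_or => /andP [nx ny].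
  have ez := Hpar z nx.
  have nzp : z != par z by apply/eqP => E; move: ez; rewrite -E irr.
  case: ifP => Ho /=.
    rewrite eqxx Fv0 /loE /hiE /= nx ny eqxx xpair_eqE (negbTE nx) /=; split => //.
  have Ho' : oedge e (par z) z by move: (oedge_or sym irr ez); rewrite Ho.
  rewrite /= (negbTE nzp) /loE /hiE /= nx ny eqxx xpair_eqE (negbTE ny) andbF /=.
  by rewrite Fvk //; split => //; case: ifP => _; lia.
have Hs := valP s.
have lt : nat_of_ord (sval s).2 < k - 1 by rewrite subn1; exact: ltn_ord.
have Hsp : spos (sval s).1.1 (sval s).1.2 (inr s : svert e k) = Some (nat_of_ord (sval s).2).+1.
  by rewrite /= -surjective_pairing eqxx.
have [_ Ev] := spos_inv irr k0 Hs Hsp.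
split => //.
- by rewrite /loE; case: ifP => _ //; case: ifP.
- rewrite /hiE; case: ifP => _; first by lia.
  by case: ifP => _; lia.
Qed.

Lemma piece_b (T : finType) (e : rel T) k x0 y0 par x y p :
  irreflexive e -> 1 < k -> oedge e x y ->
  loE x0 y0 par (x, y) <= p -> p <= hiE k x0 y0 par (x, y) ->
  piE x0 y0 par (Fv e k x y p) = (x, y).
Proof.
move=> irr k1 H lo hi.
have k0 : 0 < k by lia.
case: (boolP (0 < p < k)) => Hp.
  by have [s [-> [E1 _]]] := Fv_int (k:=k) H Hp.
have hk : hiE k x0 y0 par (x, y) <= k.
  by rewrite /hiE; case: ifP => _ //; case: ifP => _ //; exact: leq_pred.
have [Ep|Ep] : p = 0 \/ p = k by lia.
  subst p; rewrite Fv0 /= /pe.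
  move: lo; rewrite /loE; case: eqP => [[-> ->]|_]; first by rewrite eqxx.
  case: ifP => [/and3P [nx ny /eqP pxy]|] //= _.
  by rewrite (negbTE nx) (negbTE ny) /= pxy H.
subst p; rewrite Fvk //= /pe.
move: hi; rewrite /hiE; case: eqP => [[-> ->]|_]; first by rewrite eqxx orbT.
case: ifP => [/and3P [nx ny /eqP pxy]|] //= => [_|]; last by lia.
rewrite (negbTE nx) (negbTE ny) /= pxy.
by rewrite (negbTE (oedge_asym H)).
Qed.

Lemma len_cases (T : finType) (e : rel T) k x0 y0 par (r : T -> nat) x y :
  (forall z, z != x0 -> r (par z) < r z) ->
  (x, y) != (x0, y0) ->
  (loE x0 y0 par (x, y) = 0 /\ hiE k x0 y0 par (x, y) = k.-1) \/
  (loE x0 y0 par (x, y) = 1 /\ hiE k x0 y0 par (x, y) = k) \/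
  (loE x0 y0 par (x, y) = 1 /\ hiE k x0 y0 par (x, y) = k.-1).
Proof.
move=> Hr ne; rewrite /loE /hiE (negbTE ne) /=.
case: ifP => [/and3P [nx _ /eqP px]|_]; case: ifP => [/and3P [ny _ /eqP py]|_]; try by auto.
by have := Hr _ nx; have := Hr _ ny; rewrite px py; lia.
Qed.

Lemma nbr (T : finType) (e : rel T) k x y p q : irreflexive e -> 1 < k ->
  oedge e x y -> p <= k -> q <= k -> nN p q ->
  (Fv e k x y q == Fv e k x y p) || subdiv_rel e k (Fv e k x y p) (Fv e k x y q).
Proof.
move=> irr k1 H pk qk /orP [/eqP ->|Hn]; first by rewrite eqxx.
by rewrite Fv_adj // Hn orbT.
Qed.

Lemma nN_shift l p q : l <= p -> l <= q -> nN (p - l) (q - l) -> nN p q.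
Proof. rewrite /nN /nadj; lia. Qed.

Lemma nN_shift2 l p q : l <= q -> nN p (q - l) -> nN (p + l) q.
Proof. rewrite /nN /nadj; lia. Qed.

Lemma upper_bound (T : finType) (e : rel T) k : symmetric e -> irreflexive e ->
  (forall x y, connect e x y) -> (exists x y, e x y) -> 1 < k ->
  chi_dd (subdiv_rel e k) <=
    (num_edges e - 1) * chi_dd (@path_rel k) + chi_dd (@path_rel k.+1).
Proof.
move=> sym irr conn [x1 [y1 e1]] k1.
have k0 : 0 < k by lia.
have [x0 [y0 H0]] : exists x y, oedge e x y.
  by case/orP: (oedge_or sym irr e1) => H; [exists x1, y1| exists y1, x1].
have [r [par Hpr]] := tree x0 sym conn.
have Hpar : forall z, z != x0 -> e z (par z) by move=> z /Hpr [].
have Hr : forall z, z != x0 -> r (par z) < r z by move=> z /Hpr [].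
set a := chi_dd (@path_rel k.+1).
set b := chi_dd (@path_rel k).
have [g1 Hg1] := natpw_dd k.+1.
have [g2 Hg2] := natpw_dd k.
have [g3 Hg3] : exists g, natpw k.-1 b g.
  by have := natpw_pred k.-1; rewrite prednK.
pose lo E := loE x0 y0 par E.
pose hi E := hiE k x0 y0 par E.
pose len E := (hi E).+1 - lo E.
pose G E := if E == (x0, y0) then g1 else if len E == k then g2 else g3.
pose B E := if E == (x0, y0) then a else b.
have HG : forall E : T * T, [/\ natpw (len E) (B E) (G E), lo E <= 1 & hi E <= k].
  move=> [x y]; rewrite /len /G /B /lo /hi.
  case: (eqVneq (x, y) (x0, y0)) => [E|ne].
    by rewrite E /loE /hiE eqxx subn0.
  have hk : hiE k x0 y0 par (x, y) <= k.
    by rewrite /hiE; case: ifP => _ //; case: ifP => _ //; exact: leq_pred.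
  have lk : loE x0 y0 par (x, y) <= 1.
    by rewrite /loE; case: ifP => _ //; case: ifP => _ //.
  split => //.
  case: (@len_cases T e k x0 y0 par r x y Hr ne) => [[El Eh]|[[El Eh]|[El Eh]]];
    rewrite /len /lo /hi El Eh.
  - by rewrite subn0 prednK // eqxx.
  - by rewrite subn1 /= eqxx.
  - have -> : k.-1.+1 - 1 = k.-1 by lia.
    by have -> : (k.-1 == k) = false by lia.
pose pi (v : svert e k) := piE x0 y0 par v.
pose ps (v : svert e k) := posE x0 y0 par v.
pose d v := G (pi v) (ps v - lo (pi v)).
pose col v := (pi v, d v).
have PA : forall v, [/\ oedge e (pi v).1 (pi v).2, lo (pi v) <= ps v, ps v <= hi (pi v)
    & v = Fv e k (pi v).1 (pi v).2 (ps v)].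
  by move=> v; exact: (piece_a v sym irr k1 H0 Hpar).
have PB : forall E p, oedge e E.1 E.2 -> lo E <= p -> p <= hi E ->
    pi (Fv e k E.1 E.2 p) = E /\ ps (Fv e k E.1 E.2 p) = p.
  move=> [x y] p /= H lp ph.
  have E1 : pi (Fv e k x y p) = (x, y) by apply: piece_b.
  split => //.
  have [_ _ hk] := HG (x, y).
  have [_ _ h2 Ev] := PA (Fv e k x y p); move: h2 Ev; rewrite E1 /= => h2 Ev.
  by apply: (Fv_inj1 irr k0 H); [lia|lia|rewrite -Ev].
have idx : forall v, ps v - lo (pi v) < len (pi v).
  by move=> v; have [_ l h _] := PA v; rewrite /len; lia.
have lenE : forall E, len E = (hi E).+1 - lo E by [].
have BE : forall E, B E = if E == (x0, y0) then a else b by [].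
clearbody G B pi ps len hi lo.
have Hw : weakdd (subdiv_rel e k) col.
  split.
  - move=> v w nvw adj; apply/eqP => [[Epi Ed]].
    have [Hv lv hv Ev] := PA v; have [Hw' lw hw Ew] := PA w.
    have [[_ Hp _ _] _ hk] := HG (pi v).
    rewrite -Epi in lw hw.
    move: adj; rewrite {1}Ev {1}Ew -Epi Fv_adj //; [|lia|lia].
    move: Ed; rewrite /d -Epi => Ed.
    have iv := idx v; have iw := idx w; rewrite -Epi in iw.
    rewrite /nadj => /orP [/eqP Hn|/eqP Hn].
    + by move: (Hp _ _ iv iw ltac:(lia)); rewrite Ed eqxx.
    + by move: (Hp _ _ iw iv ltac:(lia)); rewrite Ed eqxx.
  - move=> v.
    have [Hv lv hv Ev] := PA v.
    have [[_ _ Hd _] l1 hk] := HG (pi v).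
    case: (Hd _ (idx v)) => u' ul Hu'.
    have [Pu Su] := PB (pi v) (u' + lo (pi v)) Hv ltac:(lia) ltac:(rewrite lenE in ul; lia).
    exists (Fv e k (pi v).1 (pi v).2 (u' + lo (pi v))) => x [Px Dx].
    rewrite Pu in Px.
    move: Dx; rewrite /d Px Pu Su addnK => Dx.
    have [_ lx hx Ex] := PA x; rewrite Px in lx hx Ex.
    have ix := idx x; rewrite Px in ix.
    have Hn' : nN (ps v) (ps x) by apply: nN_shift (Hu' _ ix Dx).
    have pv : ps v <= k by lia.
    have px : ps x <= k by lia.
    have := nbr irr k1 Hv pv px Hn'.
    by rewrite -Ex -Ev.
  - move=> u.
    have [Hu lu hu Eu] := PA u.
    have [[_ _ _ Hd] l1 hk] := HG (pi u).
    case: (Hd _ (idx u)) => v' vl Hv'.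
    exists (Fv e k (pi u).1 (pi u).2 (v' + lo (pi u))) => x [Px Dx].
    move: Dx; rewrite /d Px => Dx.
    have [_ lx hx Ex] := PA x; rewrite Px in lx hx Ex.
    have ix := idx x; rewrite Px in ix.
    have Hn' : nN (v' + lo (pi u)) (ps x) by apply: nN_shift2 (Hv' _ ix Dx).
    have pv : v' + lo (pi u) <= k by rewrite lenE in vl; lia.
    have px : ps x <= k by lia.
    have := nbr irr k1 Hu pv px Hn'.
    by rewrite -Ex.
pose A := [set E : T * T | oedge e E.1 E.2] :\ (x0, y0).
pose S := [seq ((x0, y0), i) | i <- iota 0 a] ++ [seq (E, j) | E <- enum A, j <- iota 0 b].
have W := weak_chi Hw; move: W; set s0 := undup _ => W.
have sub : {subset s0 <= S}.
  move=> c; rewrite mem_undup => /mapP [v _ ->]; rewrite mem_cat.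
  have [Hv lv hv Ev] := PA v.
  have [[Hb _ _ _] _ _] := HG (pi v).
  have bd := Hb _ (idx v).
  case: (eqVneq (pi v) (x0, y0)) => Ep.
    apply/orP; left; rewrite /col /d Ep; apply: map_f.
    by rewrite mem_iota /=; move: bd; rewrite /d Ep BE eqxx.
  apply/orP; right; rewrite /col; apply: allpairs_f.
    by rewrite mem_enum !inE Ep Hv.
  by rewrite mem_iota /=; move: bd; rewrite BE (negbTE Ep).
have := leq_trans W (uniq_leq_size (undup_uniq _) sub).
rewrite size_cat size_map size_iota size_allpairs size_iota -cardE.
have -> : #|A| = num_edges e - 1.
  rewrite /num_edges (cardsD1 (x0, y0) [set E : T * T | oedge e E.1 E.2]) inE H0 /=.
  by rewrite add1n subn1.
by rewrite addnC.
Qed.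

Theorem theorem5 (T : finType) (e : rel T) (k : nat) :
  symmetric e -> irreflexive e ->
  (forall x y : T, connect e x y) ->
  (exists x y : T, e x y) ->
  2 <= k ->
  chi_dd (@path_rel k.+1) <= chi_dd (subdiv_rel e k) <=
    (num_edges e - 1) * chi_dd (@path_rel k) + chi_dd (@path_rel k.+1).
Proof.
move=> sym irr conn ex k2; apply/andP; split.
  exact: lower_bound.
exact: upper_bound.
Qed.
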